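(* Assume the setting described in the context and suppose the event $\mathcal{E}$ holds. Let $\gamma\in(0,1)$, let $S\subseteq[n]$ with $|S|=k$ and $\|\mathbf{v}_S\|_2\ge\sqrt\gamma$, and let $\mathbf{w}^{(0)}$ be a unit eigenvector for the largest eigenvalue of $\hat{\boldsymbol{\Gamma}}_{S,S}$, zero-padded to $\mathbb{R}^n$. Then there is an absolute constant $C_1>0$ such that $$ \alpha_0:=|\langle\mathbf{w}^{(0)},\mathbf{v}\rangle|\ \ge\ \sqrt\gamma\sqrt{\Big(1-\frac{C_1(1+\theta)^2}{\theta^2\gamma^2}\cdot\frac{k\log n}{m}\Big)_+}, $$ where $(x)_+=\max\{x,0\}$. In particular, there are absolute constants $C>0$ and $c_0\in(0,1/2]$ such that if $m\ge C\frac{(1+\theta)^2}{\theta^2\gamma^2}k\log n$, then $\alpha_0\ge c_0\gamma$.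
   Context: Let $n\ge 2$, $m\ge1$, $\theta>0$, $k\in[n]$; $\mathbf{v}\in\mathbb{R}^n$ a unit vector with at most $k$ nonzero entries; $\mathbf{x}_1,\dots,\mathbf{x}_m$ i.i.d. $\mathcal{N}(\mathbf{0},\mathbf{I}_n+\theta\mathbf{v}\mathbf{v}^\top)$; $\hat{\boldsymbol{\Gamma}}=\frac1m\sum_i\mathbf{x}_i\mathbf{x}_i^\top-\mathbf{I}_n$; $\mathbf{W}=\hat{\boldsymbol{\Gamma}}-\theta\mathbf{v}\mathbf{v}^\top$. $\mathbf{v}_S$ is the restriction of $\mathbf{v}$ to $S$, $\hat{\boldsymbol{\Gamma}}_{S,S}$ a principal submatrix, $\|\cdot\|_2$ Euclidean/spectral norm. Fix an absolute constant $C_0>0$; $\mathcal{E}$ is the event that $\|\mathbf{W}_{S,S}\|_2\le C_0(1+\theta)\sqrt{|S|\log n/m}$ for all nonempty $S\subseteq[n]$. (In the paper, $S$ is the final support $S^{(k)}$ of the SEP algorithm and $\mathbf{w}^{(0)}$ its output.) Absolute constants do not depend on $n,m,k,\theta,\mathbf{v},\gamma$. *)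

(* Defs.v *)
From HB Require Import structures.
From mathcomp Require Import all_boot all_order all_algebra.
From mathcomp Require Import all_classical all_reals all_analysis.
Set Implicit Arguments. Unset Strict Implicit. Unset Printing Implicit Defensive.
Import Order.TTheory GRing.Theory Num.Theory.
Local Open Scope ring_scope.
Local Open Scope classical_set_scope.

Section Defs.
Variable R : realType.

Definition norm2 (p : nat) (u : 'cV[R]_p) : R := Num.sqrt (\sum_i u i 0 ^+ 2).
Definition dot (p : nat) (u w : 'cV[R]_p) : R := \sum_i u i 0 * w i 0.

Definition opnorm (p q : nat) (A : 'M[R]_(p, q)) : R :=
  sup [set norm2 (A *m u) | u in [set u : 'cV[R]_q | norm2 u = 1]].

(* Indexing of a subset S of [n] by 'I_#|S| (increasing enumeration). *)
Definition sidx (n : nat) (S : {set 'I_n}) : 'I_#|S| -> 'I_n :=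
  fun i => @enum_val _ (mem S) i.
Arguments sidx [n] S i.

Definition subsq (n : nat) (S : {set 'I_n}) (A : 'M[R]_n) : 'M[R]_#|S| :=
  mxsub (sidx S) (sidx S) A.
Definition vsub (n : nat) (S : {set 'I_n}) (v : 'cV[R]_n) : 'cV[R]_#|S| :=
  rowsub (sidx S) v.

Definition pad (n : nat) (S : {set 'I_n}) (y : 'cV[R]_#|S|) : 'cV[R]_n :=
  \col_j (\sum_(i < #|S| | sidx S i == j) y i 0).

Definition unit_top_eigvec (p : nat) (A : 'M[R]_p) (y : 'cV[R]_p) : Prop :=
  norm2 y = 1 /\
  exists lam : R, A *m y = lam *: y /\ (forall mu : R, eigenvalue A mu -> mu <= lam).

Definition Gammahat (n m : nat) (x : 'I_m -> 'cV[R]_n) : 'M[R]_n :=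
  (m%:R)^-1 *: (\sum_i (x i *m (x i)^T)) - 1%:M.

Definition eventE (C0 theta : R) (n m : nat) (W : 'M[R]_n) : Prop :=
  forall S : {set 'I_n}, S != finset.set0 ->
    opnorm (subsq S W) <=
      C0 * (1 + theta) * Num.sqrt (#|S|%:R * ln (n%:R : R) / m%:R).

End Defs.

(* Main.v *)
Require Import Defs.
From HB Require Import structures.
From mathcomp Require Import all_boot all_order all_algebra.
From mathcomp Require Import all_classical all_reals all_analysis.
From mathcomp Require Import ring lra.
Import Order.TTheory GRing.Theory Num.Theory.
Import numFieldNormedType.Exports.
Local Open Scope ring_scope.
Local Open Scope classical_set_scope.
Set Implicit Arguments. Unset Strict Implicit. Unset Printing Implicit Defensive.

Section S.
Variable R : realType.

Lemma cont_sum (T : topologicalType) p (F : 'I_p -> T -> R) :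
  (forall i, continuous (F i)) -> continuous (fun x => \sum_(i < p) F i x).
Proof.
elim: p F => [|p IH] F hF.
  rewrite (_ : (fun x => _) = (fun=> 0)); first exact: cst_continuous.
  by apply: funext => y; rewrite big_ord0.
rewrite (_ : (fun x => _) = (fun x => \sum_(i < p) F (widen_ord (leqnSn p) i) x + F ord_max x)).
  move=> x; apply: continuousD; first exact: (IH (fun i => F (widen_ord (leqnSn p) i))).
  exact: hF.
by apply: funext => y; rewrite big_ord_recr.
Qed.

Lemma quad_cont p (M : 'M[R]_p) :
  continuous (fun w : 'rV[R]_p => (w *m M *m w^T) 0 0).
Proof.
rewrite (_ : (fun w => _) = (fun w : 'rV[R]_p => \sum_(j < p) (\sum_(i < p) w 0 i * M i j) * w 0 j)).
  apply: cont_sum => j x; apply: continuousM; last exact: coord_continuous.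
  apply: cont_sum => i y; apply: continuousM; first exact: coord_continuous.
  exact: cst_continuous.
apply: funext => w; rewrite mxE; apply: eq_bigr => j _; rewrite !mxE; congr (_ * _); apply: eq_bigr => i _; rewrite mxE.

Qed.

Definition qf p (M : 'M[R]_p) (w : 'rV[R]_p) : R := (w *m M *m w^T) 0 0.
Definition nsq p (w : 'rV[R]_p) : R := (w *m w^T) 0 0.

Lemma nsqE p (w : 'rV[R]_p) : nsq w = \sum_j w 0 j ^+ 2.
Proof. by rewrite /nsq mxE; apply: eq_bigr => j _; rewrite mxE expr2. Qed.

Lemma nsq_ge0 p (w : 'rV[R]_p) : 0 <= nsq w.
Proof. by rewrite nsqE sumr_ge0 // => j _; rewrite sqr_ge0. Qed.

Lemma nsq0 p (w : 'rV[R]_p) : nsq w = 0 -> w = 0.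
Proof.
rewrite nsqE => h; apply/rowP => j; rewrite mxE.
have := psumr_eq0P (fun j _ => sqr_ge0 (w 0 j)) h (isT : true) (i := j).
by move/eqP; rewrite sqrf_eq0 => /eqP.
Qed.

Lemma qfZ p (M : 'M[R]_p) c w : qf M (c *: w) = c ^+ 2 * qf M w.
Proof.
by rewrite /qf linearZ /= -!scalemxAl -scalemxAr scalerA mxE expr2.
Qed.

Lemma nsqZ p c (w : 'rV[R]_p) : nsq (c *: w) = c ^+ 2 * nsq w.
Proof. by rewrite /nsq linearZ /= -scalemxAl -scalemxAr scalerA mxE expr2. Qed.

Lemma rayleigh_max p (A : 'M[R]_p) : (0 < p)%N ->
  exists z : 'rV[R]_p, nsq z = 1 /\ forall w, qf A w <= qf A z * nsq w.
Proof.
move=> p0.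
pose K := [set w : 'rV[R]_p | nsq w = 1].
have K0 : K !=set0.
  exists (delta_mx 0 (Ordinal p0)); rewrite /K /= /nsq trmx_delta mul_delta_mx.
  by rewrite mxE !eqxx.
have cK : compact K.
  apply: (@subclosed_compact _ K [set v : 'rV[R]_p | forall i, `[-1, 1]%classic (v ord0 i)]).
  - apply: (@preimage_closed _ _ (@nsq p) [set x | x = 1]); last exact: closed_eq.
    have e : @nsq p = (fun w => (w *m 1%:M *m w^T) 0 0).
      by apply: funext => u; rewrite /nsq mulmx1.
    by move=> w _; rewrite e; exact: quad_cont.
  - have h := (@rV_compact R p (fun=> `[-1, 1]%classic)).
    apply: h => i; exact: segment_compact.
  - move=> w /= Kw i; rewrite /= in_itv /=.
    have : w 0 i ^+ 2 <= 1.
      rewrite -Kw nsqE (bigD1 i) //= lerDl sumr_ge0 // => j _; exact: sqr_ge0.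
    move=> h; apply/andP; split; nra.
have [z zK zmax] := compact_EVT_max K0 cK (continuous_subspaceT (@quad_cont p A)).
exists z; split; first by move: zK; rewrite inE.
move=> w; have [w0|wn0] := eqVneq (nsq w) 0.
  by rewrite w0 mulr0 (nsq0 w0) /qf !mul0mx mxE.
have wpos : 0 < nsq w by rewrite lt_neqAle eq_sym wn0 nsq_ge0.
pose s := Num.sqrt (nsq w).
have s0 : 0 < s by rewrite sqrtr_gt0.
have ss : s ^+ 2 = nsq w by rewrite sqr_sqrtr // nsq_ge0.
have : s^-1 *: w \in K.
  by rewrite inE /K /= nsqZ exprVn ss mulVr ?unitfE.
move/zmax; rewrite /qf -/(qf A _) qfZ exprVn ss => h.
have hx : nsq w * (nsq w)^-1 = 1 by rewrite divff.
change (qf A w <= qf A z * nsq w).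
move: h hx wpos; rewrite -/(qf A z).
move: (qf A w) (qf A z) (nsq w) ((nsq w)^-1) => a b x y h hx x0.
have e : y * a * x = a by rewrite -[RHS]mulr1 -hx; ring.
by rewrite -e; apply: ler_wpM2r => //; exact: ltW.
Qed.

Lemma e1B (X Y : 'M[R]_1) : (X - Y) 0 0 = X 0 0 - Y 0 0.
Proof. by rewrite !mxE. Qed.
Lemma e1D (X Y : 'M[R]_1) : (X + Y) 0 0 = X 0 0 + Y 0 0.
Proof. by rewrite !mxE. Qed.
Lemma e1Z c (X : 'M[R]_1) : (c *: X) 0 0 = c * X 0 0.
Proof. by rewrite !mxE. Qed.

Lemma quad_zero (N c : R) : 0 <= N ->
  (forall t, 0 < t -> 2 * t * N + t ^+ 2 * c <= 0) -> N = 0.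
Proof.
move=> N0 h; apply/eqP; rewrite eq_le N0 andbT; rewrite leNgt; apply/negP => Np.
have c1 : 0 < `|c| + 1 by rewrite ltr_pwDr // normr_ge0.
pose t := N / (`|c| + 1).
have t0 : 0 < t by rewrite divr_gt0.
have ht : t * (`|c| + 1) = N by rewrite /t mulfVK // gt_eqF.
have hc : - `|c| <= c by rewrite lerNl ler_normr lexx orbT.
have := h t t0; nra.
Qed.

Definition bf p (M : 'M[R]_p) (a b : 'rV[R]_p) : R := (a *m M *m b^T) 0 0.

Lemma bf_expand p (M : 'M[R]_p) a b t :
  bf M (a + t *: b) (a + t *: b) =
  bf M a a + t * (bf M a b + bf M b a) + t ^+ 2 * bf M b b.
Proof.
rewrite /bf linearD /= linearZ /= !mulmxDl !mulmxDr -!scalemxAl -!scalemxAr.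
rewrite !mxE; ring.
Qed.

Lemma bf_sym p (M : 'M[R]_p) a b : M^T = M -> bf M a b = bf M b a.
Proof.
move=> hM; rewrite /bf.
have h (X : 'M[R]_1) : X 0 0 = X^T 0 0 by rewrite mxE.
by rewrite h !trmx_mul trmxK hM mulmxA.
Qed.

Lemma max_is_eig p (A : 'M[R]_p) z : A^T = A -> nsq z = 1 ->
  (forall w, qf A w <= qf A z * nsq w) -> z *m A = qf A z *: z.
Proof.
move=> hA hz hmax.
set mu := qf A z.
set e := z *m A - mu *: z.
have key : bf A z e - mu * bf 1%:M z e = nsq e.
  rewrite /bf /nsq mulmx1 [in RHS]/e mulmxBl -scalemxAl e1B e1Z.
  by rewrite -mulmxA.
have hq w : qf A w = bf A w w by [].
have hn w : nsq w = bf 1%:M w w by rewrite /bf mulmx1.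
have s1 : bf 1%:M e z = bf 1%:M z e by rewrite (@bf_sym _ 1%:M) // trmx1.
have sA : bf A e z = bf A z e by rewrite bf_sym.
have N0 : nsq e = 0.
  apply: (@quad_zero _ (qf A e - mu * nsq e)); first exact: nsq_ge0.
  move=> t t0; have := hmax (z + t *: e).
  rewrite hq hn !bf_expand -hq -hn -/mu hz s1 sA => h.
  rewrite -[in X in 2 * t * X]key.
  move: h; set a := bf A z e; set b := bf 1%:M z e; rewrite -hq -hn.
  move=> h; nra.
by apply/eqP; rewrite -subr_eq0; apply/eqP; exact: nsq0.
Qed.

Lemma norm2_dot p (u : 'cV[R]_p) : norm2 u = Num.sqrt (dot u u).
Proof. by rewrite /norm2 /dot; congr Num.sqrt; apply: eq_bigr => i _; rewrite expr2. Qed.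

Lemma dot_ge0 p (u : 'cV[R]_p) : 0 <= dot u u.
Proof. by rewrite /dot sumr_ge0 // => i _; rewrite -expr2 sqr_ge0. Qed.

Lemma norm2_ge0 p (u : 'cV[R]_p) : 0 <= norm2 u.
Proof. exact: sqrtr_ge0. Qed.

Lemma norm2_sq p (u : 'cV[R]_p) : norm2 u ^+ 2 = dot u u.
Proof. by rewrite norm2_dot sqr_sqrtr // dot_ge0. Qed.

Lemma dotE p (u w : 'cV[R]_p) : dot u w = (u^T *m w) 0 0.
Proof. by rewrite /dot mxE; apply: eq_bigr => i _; rewrite mxE. Qed.

Lemma dotC p (u w : 'cV[R]_p) : dot u w = dot w u.
Proof. by rewrite /dot; apply: eq_bigr => i _; rewrite mulrC. Qed.

Lemma dotDr p (u w1 w2 : 'cV[R]_p) : dot u (w1 + w2) = dot u w1 + dot u w2.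
Proof. by rewrite !dotE mulmxDr e1D. Qed.

Lemma dotBr p (u w1 w2 : 'cV[R]_p) : dot u (w1 - w2) = dot u w1 - dot u w2.
Proof. by rewrite !dotE mulmxBr e1B. Qed.

Lemma dotZr p c (u w : 'cV[R]_p) : dot u (c *: w) = c * dot u w.
Proof. by rewrite !dotE -scalemxAr e1Z. Qed.

Lemma dotBl p (u1 u2 w : 'cV[R]_p) : dot (u1 - u2) w = dot u1 w - dot u2 w.
Proof. by rewrite dotC dotBr !(dotC w). Qed.

Lemma dotZl p c (u w : 'cV[R]_p) : dot (c *: u) w = c * dot u w.
Proof. by rewrite dotC dotZr dotC. Qed.

Lemma dot0 p (u : 'cV[R]_p) : dot u u = 0 -> u = 0.
Proof.
rewrite /dot => h; apply/matrixP => i j; rewrite (ord1 j) mxE.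
have hF : forall i : 'I_p, true -> 0 <= u i 0 * u i 0.
  by move=> k _; rewrite -expr2 sqr_ge0.
by have /eqP := psumr_eq0P hF h (isT : true) (i := i); rewrite mulf_eq0 orbb => /eqP.
Qed.

Lemma CS p (a b : 'cV[R]_p) : dot a b <= norm2 a * norm2 b.
Proof.
set na := norm2 a; set nb := norm2 b.
have ha := norm2_sq a; have hb := norm2_sq b.
have na0 : 0 <= na := norm2_ge0 a; have nb0 : 0 <= nb := norm2_ge0 b.
have h : 0 <= dot (nb *: a - na *: b) (nb *: a - na *: b) := dot_ge0 _.
rewrite !dotBl !dotBr !dotZl !dotZr (dotC b a) -ha -hb -/na -/nb in h.
have [z|nz] := eqVneq (na * nb) 0.
  move/eqP: z; rewrite mulf_eq0 => /orP[] /eqP z.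
    have a0 : a = 0 by apply: dot0; rewrite -ha -/na z expr2 mulr0.
    by rewrite a0 /dot big1 ?mulr_ge0 // => i _; rewrite mxE mul0r.
  have b0 : b = 0 by apply: dot0; rewrite -hb -/nb z expr2 mulr0.
  by rewrite b0 /dot big1 ?mulr_ge0 // => i _; rewrite mxE mulr0.
have pos : 0 < na * nb by rewrite lt_neqAle eq_sym nz mulr_ge0.
nra.
Qed.

Lemma CSabs p (a b : 'cV[R]_p) : `|dot a b| <= norm2 a * norm2 b.
Proof.
rewrite ler_norml CS andbT lerNl.
have e1 : dot a (- b) = - dot a b.
  by rewrite /dot -sumrN; apply: eq_bigr => i _; rewrite mxE mulrN.
have e2 : norm2 (- b) = norm2 b.
  by rewrite /norm2; congr Num.sqrt; apply: eq_bigr => i _; rewrite mxE sqrrN.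
by rewrite -e1 -e2 CS.
Qed.

Lemma top_eig_ge p (A : 'M[R]_p) (lam : R) (u : 'cV[R]_p) : A^T = A ->
  (forall mu, eigenvalue A mu -> mu <= lam) -> norm2 u = 1 ->
  dot u (A *m u) <= lam.
Proof.
move=> hA hl hu.
have du : dot u u = 1 by rewrite -norm2_sq hu expr1n.
have p0 : (0 < p)%N.
  rewrite lt0n; apply/negP => /eqP p0; move: A u hA hl hu du; rewrite p0.
  by move=> A u _ _ _; rewrite /dot big_ord0 => /eqP; rewrite eq_sym oner_eq0.
have [z [hz hmax]] := rayleigh_max A p0.
have hE := max_is_eig hA hz hmax.
have ev : eigenvalue A (qf A z).
  apply/eigenvalueP; exists z => //.
  by apply/eqP => z0; move: hz; rewrite z0 /nsq mul0mx mxE => /eqP; rewrite eq_sym oner_eq0.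
have := hmax u^T.
have -> : nsq u^T = 1 by rewrite /nsq trmxK -dotE.
have -> : qf A u^T = dot u (A *m u) by rewrite /qf trmxK dotE mulmxA.
rewrite mulr1 => h; apply: le_trans h _; exact: hl.
Qed.

Lemma opnorm_ge p q (E : 'M[R]_(p, q)) (u : 'cV[R]_q) : norm2 u = 1 ->
  norm2 (E *m u) <= opnorm E.
Proof.
move=> hu; apply: sup_upper_bound; last by exists u.
split; first by exists (norm2 (E *m u)); exists u.
exists (Num.sqrt (\sum_i (\sum_j `|E i j|) ^+ 2)).
move=> _ [w /= hw <-].
have dw : \sum_i w i 0 ^+ 2 = 1.
  by move: hw; rewrite /norm2 => h; rewrite -[LHS]sqr_sqrtr ?h ?expr1n // sumr_ge0 // => i _; rewrite sqr_ge0.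
have wb j : `|w j 0| <= 1.
  have : w j 0 ^+ 2 <= 1.
    rewrite -dw (bigD1 j) //= lerDl sumr_ge0 // => k _; exact: sqr_ge0.
  move=> h; rewrite ler_norml; apply/andP; split; nra.
rewrite /norm2 ler_sqrt; last by rewrite sumr_ge0 // => i _; rewrite sqr_ge0.
apply: ler_sum => i _; rewrite mxE.
have h1 : `|\sum_j E i j * w j 0| <= \sum_j `|E i j|.
  apply: le_trans (ler_norm_sum _ _ _) _; apply: ler_sum => j _.
  by rewrite normrM ler_piMr.
have h0 : 0 <= `|\sum_j E i j * w j 0| by [].
move: h1 h0; set x := \sum_j _; set y := \sum_j _ => h1 h0.
have := ler_norml x y; rewrite h1 => /esym /andP [h2 h3]; nra.
Qed.

Lemma Gammahat_sym n m (x : 'I_m -> 'cV[R]_n) : (Gammahat x)^T = Gammahat x.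
Proof.
rewrite /Gammahat linearB linearZ /= trmx1 linear_sum /=.
by congr (_ *: _ - _); apply: eq_bigr => i _; rewrite trmx_mul trmxK.
Qed.

Lemma subsq_tr n (S : {set 'I_n}) (M : 'M[R]_n) : (subsq S M)^T = subsq S M^T.
Proof. by apply/matrixP => i j; rewrite !mxE. Qed.

Lemma subsq_W n (S : {set 'I_n}) (G : 'M[R]_n) th (v : 'cV[R]_n) :
  subsq S (G - th *: (v *m v^T)) = subsq S G - th *: (vsub S v *m (vsub S v)^T).
Proof.
apply/matrixP => i j; rewrite !mxE; congr (_ - _ * _).
by apply: eq_bigr => k _; rewrite !mxE.
Qed.

Lemma dot_pad n (S : {set 'I_n}) (y : 'cV[R]_#|S|) (v : 'cV[R]_n) :
  dot (pad y) v = dot y (vsub S v).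
Proof.
rewrite /dot /pad.
under eq_bigr do rewrite mxE big_distrl /=.
under eq_bigr do rewrite big_mkcond /=.
rewrite exchange_big /=; apply: eq_bigr => i _.
rewrite -big_mkcond /= (big_pred1 (sidx i)) ?mxE // => j /=; rewrite eq_sym.
Qed.

Lemma outerE p (w z : 'cV[R]_p) : (w *m w^T) *m z = dot w z *: w.
Proof.
rewrite -mulmxA; have -> : w^T *m z = (dot w z)%:M.
  apply/matrixP => i j; rewrite (ord1 i) (ord1 j) !mxE /= mulr1n /dot.
  by apply: eq_bigr => k _; rewrite mxE.
by rewrite -scalemx1 -scalemxAr mulmx1.
Qed.

Lemma core p (A E : 'M[R]_p) (vs y : 'cV[R]_p) th lam eps :
  A^T = A -> A = E + th *: (vs *m vs^T) -> 0 < norm2 vs ->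
  (forall u, norm2 u = 1 -> norm2 (E *m u) <= eps) ->
  norm2 y = 1 -> A *m y = lam *: y -> (forall mu, eigenvalue A mu -> mu <= lam) ->
  th * norm2 vs ^+ 2 - eps <= lam /\
  lam * (1 - (dot y vs / norm2 vs) ^+ 2) <=
     Num.sqrt (1 - (dot y vs / norm2 vs) ^+ 2) * eps /\
  0 <= 1 - (dot y vs / norm2 vs) ^+ 2.
Proof.
move=> hA hAE a0 hE hy hev hl.
set a := norm2 vs in a0 *.
have an0 : a != 0 by rewrite gt_eqF.
set u := a^-1 *: vs.
have vsu : vs = a *: u by rewrite /u scalerA divff // scale1r.
have duu : dot u u = 1.
  by rewrite /u dotZl dotZr -norm2_sq -/a mulrA -expr2 -exprMn mulVf // expr1n.
have hu : norm2 u = 1 by rewrite norm2_dot duu sqrtr1.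
have dvu : dot vs u = a by rewrite /u dotZr -norm2_sq -/a expr2 mulKf.
have duv : dot u vs = a by rewrite dotC.
have dyy : dot y y = 1 by rewrite -norm2_sq hy expr1n.
set c := dot y vs / a.
have cE : c = dot y u by rewrite /u dotZr mulrC.
have Av w : A *m w = E *m w + (th * dot vs w) *: vs.
  by rewrite hAE mulmxDl -scalemxAl outerE scalerA.
split.
  have := top_eig_ge hA hl hu.
  rewrite Av dotDr dotZr dvu duv.
  have := CSabs u (E *m u); rewrite hu mul1r => h1.
  have h2 := hE u hu.
  rewrite ler_norml in h1; case/andP: h1 => h1 _.
  move=> h; rewrite expr2; nra.
set r := y - c *: u.
have dru : dot r u = 0 by rewrite /r dotBl dotZl duu mulr1 -cE subrr.
have dry : dot r y = 1 - c ^+ 2 by rewrite /r dotBl dotZl dyy (dotC u y) -cE expr2.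
have drr : dot r r = 1 - c ^+ 2 by rewrite {2}/r dotBr dotZr dru mulr0 subr0.
have nr : norm2 r = Num.sqrt (1 - c ^+ 2) by rewrite norm2_dot drr.
split; last by rewrite -drr dot_ge0.
have e1 : dot r (A *m y) = lam * (1 - c ^+ 2) by rewrite hev dotZr dry.
have drv : dot r vs = 0.
  by rewrite /r dotBl dotZl duv /c mulfVK // subrr.
have e2 : dot r (A *m y) = dot r (E *m y) by rewrite Av dotDr dotZr drv mulr0 addr0.
rewrite -e1 e2 -nr; apply: le_trans (CS _ _) _.
by apply: ler_wpM2l; [exact: norm2_ge0 | exact: hE].
Qed.

Lemma final_real (th a gam lam eps cc X : R) :
  0 < th -> 0 < gam -> Num.sqrt gam <= a -> 0 <= eps ->
  th * a ^+ 2 - eps <= lam ->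
  lam * (1 - cc ^+ 2) <= Num.sqrt (1 - cc ^+ 2) * eps -> 0 <= 1 - cc ^+ 2 ->
  X * (th ^+ 2 * gam ^+ 2) = 4 * eps ^+ 2 ->
  Num.sqrt gam * Num.sqrt (Num.max (1 - X) 0) <= a * `|cc|.
Proof.
move=> th0 g0 ha e0 hl hd d0 hX.
have sg0 : 0 <= Num.sqrt gam := sqrtr_ge0 _.
have a0 : 0 <= a := le_trans sg0 ha.
have ga : gam <= a ^+ 2.
  have := sqr_sqrtr (ltW g0); move: (Num.sqrt gam) sg0 ha => q q0 qa <-; nra.
have [hX1|] := boolP (1 <= X).
  rewrite max_r ?subr_le0 // sqrtr0 mulr0; exact: mulr_ge0.
rewrite -ltNge => hX1.
have hX2 : 0 <= 1 - X by lra.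
rewrite max_l //.
apply: ler_pM => //.
rewrite -sqrtr_sqr ler_sqrt ?sqr_ge0 //.
set d := 1 - cc ^+ 2 in hd d0 *.
suff : d <= X by rewrite /d; lra.
set g := th * gam.
have g0' : 0 < g by rewrite mulr_gt0.
have hX' : X * g ^+ 2 = 4 * eps ^+ 2 by rewrite exprMn.
have X0 : 0 <= X.
  have : 0 <= X * g ^+ 2 by rewrite hX' mulr_ge0 // sqr_ge0.
  by rewrite pmulr_lge0 // exprn_gt0.
have e2 : 2 * eps < g.
  have : (2 * eps) ^+ 2 < g ^+ 2.
    have -> : (2 * eps) ^+ 2 = X * g ^+ 2 by rewrite hX'; ring.
    have gg : 0 < g ^+ 2 by rewrite exprn_gt0.
    nra.
  by rewrite ltr_pXn2r // ?nnegrE ?mulr_ge0 // ltW.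
have gl : g <= th * a ^+ 2 by rewrite ler_pM2l.
have lg : g / 2 <= lam by lra.
set s := Num.sqrt d in hd.
have s0 : 0 <= s := sqrtr_ge0 _.
have ds : d = s ^+ 2 by rewrite sqr_sqrtr.
rewrite ds in hd *.
have [->|sp] := eqVneq s 0; first by rewrite expr0n /=.
have sp' : 0 < s by rewrite lt_neqAle eq_sym sp.
have h1 : lam * s <= eps.
  by rewrite -(ler_pM2r sp') mulrAC -mulrA -expr2 [eps * s]mulrC.
have h2 : g * s <= 2 * eps by nra.
have h3 : (g * s) ^+ 2 <= (2 * eps) ^+ 2.
  by rewrite ler_pXn2r // ?nnegrE ?mulr_ge0 // ltW.
rewrite -(ler_pM2r (exprn_gt0 2 g0')) hX'.
by move: h3; rewrite !exprMn mulrC => h3; lra.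
Qed.
End S.

Local Close Scope classical_set_scope.
Unset Implicit Arguments.
Set Strict Implicit.

Theorem proposition5 (R : realType) (C0 : R) : 0 < C0 ->
  exists C1 : R, 0 < C1 /\
  exists C : R, exists c0 : R, 0 < C /\ 0 < c0 /\ c0 <= 1 / 2 /\
  forall (n m k : nat) (theta : R) (v : 'cV[R]_n) (x : 'I_m -> 'cV[R]_n),
    (2 <= n)%N -> (1 <= m)%N -> 0 < theta -> (1 <= k <= n)%N ->
    norm2 v = 1 -> (#|[set i | v i ord0 != 0%R]| <= k)%N ->
    eventE C0 theta m (Gammahat x - theta *: (v *m v^T)) ->
    forall (gamma : R) (S : {set 'I_n}) (y : 'cV[R]_#|S|),
      0 < gamma < 1 -> #|S| = k ->
      Num.sqrt gamma <= norm2 (vsub S v) ->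
      unit_top_eigvec (subsq S (Gammahat x)) y ->
      let alpha0 := `|dot (pad y) v| in
      Num.sqrt gamma *
        Num.sqrt (Num.max (1 - C1 * (1 + theta) ^+ 2 / (theta ^+ 2 * gamma ^+ 2)
                                 * (k%:R * ln (n%:R : R) / m%:R)) 0)
        <= alpha0 /\
      (C * (1 + theta) ^+ 2 / (theta ^+ 2 * gamma ^+ 2) * k%:R * ln (n%:R : R) <= m%:R ->
       c0 * gamma <= alpha0).
Proof.
move=> C00.
exists (4 * C0 ^+ 2); split; first by rewrite mulr_gt0 // exprn_gt0.
exists (8 * C0 ^+ 2), (1 / 2); split; first by rewrite mulr_gt0 // exprn_gt0.
split; first by rewrite divr_gt0.
split; first exact: lexx.
move=> n m k theta v x hn hm hth /andP [hk1 hkn] hv hsupp hE gam S y /andP [g0 g1] hS hvs.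
case=> hy [lam [hAy hl]] alpha0.
set t := k%:R * ln (n%:R : R) / m%:R.
have lnn : 0 < ln (n%:R : R) by apply: ln_gt0; rewrite ltr1n.
have m0 : 0 < (m%:R : R) by rewrite ltr0n.
have t0 : 0 <= t by rewrite /t divr_ge0 // mulr_ge0 // ltW.
set eps := C0 * (1 + theta) * Num.sqrt t.
have eps0 : 0 <= eps by rewrite /eps !mulr_ge0 ?sqrtr_ge0 // ltW // ?addr_gt0.
have SS : S != finset.set0 by rewrite -card_gt0 hS.
have hop := hE S SS; rewrite subsq_W [in X in Num.sqrt X]hS -/t -/eps in hop.
set A := subsq S (Gammahat x) in hAy hl hop.
set vs := vsub S v in hvs hop.
set E := A - theta *: (vs *m vs^T) in hop.
have a0 : 0 < norm2 vs by apply: lt_le_trans hvs; rewrite sqrtr_gt0.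
have hAs : A^T = A by rewrite /A subsq_tr Gammahat_sym.
have hAE : A = E + theta *: (vs *m vs^T) by rewrite /E subrK.
have hEb : forall u, norm2 u = 1 -> norm2 (E *m u) <= eps.
  by move=> u hu; apply: le_trans (opnorm_ge E hu) hop.
have [h1 [h2 h3]] := core hAs hAE a0 hEb hy hAy hl.
set c := dot y vs / norm2 vs in h2 h3.
have hal : alpha0 = norm2 vs * `|c|.
  by rewrite /alpha0 dot_pad -/vs /c normrM normfV (ger0_norm (ltW a0)) mulrCA mulfV ?gt_eqF // mulr1.
set X := 4 * C0 ^+ 2 * (1 + theta) ^+ 2 / (theta ^+ 2 * gam ^+ 2) * t.
have hX : X * (theta ^+ 2 * gam ^+ 2) = 4 * eps ^+ 2.
  rewrite /eps !exprMn sqr_sqrtr // /X; field.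
  by rewrite !gt_eqF.
have part1 := final_real hth g0 hvs eps0 h1 h2 h3 hX.
rewrite hal; split => // hm2.
have hX12 : X <= 1 / 2.
  set K := C0 ^+ 2 * (1 + theta) ^+ 2 / (theta ^+ 2 * gam ^+ 2) * k%:R * ln (n%:R : R).
  have eX : X * m%:R = 4 * K.
    rewrite /X /K /t; field; rewrite !gt_eqF //.
  have eH : 8 * C0 ^+ 2 * (1 + theta) ^+ 2 / (theta ^+ 2 * gam ^+ 2) * k%:R * ln (n%:R : R) = 8 * K.
    by rewrite /K; field; rewrite !gt_eqF.
  rewrite eH in hm2; nra.
apply: le_trans part1.
have mx : 1 / 2 <= Num.max (1 - X) 0.
  rewrite le_max; apply/orP; left; lra.
have gh : 0 <= gam / 2 by rewrite divr_ge0 // ltW.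
have g12 : 0 <= 1 / 2 * gam by rewrite mulrC mul1r.
rewrite -(sqrtrM _ (ltW g0)) -(ger0_norm g12).
have mx0 : 0 <= gam * Num.max (1 - X) 0 by apply: mulr_ge0; [exact: ltW | lra].
rewrite -sqrtr_sqr ler_sqrt //.
have : gam * (1 / 2) <= gam * Num.max (1 - X) 0 by rewrite ler_pM2l.
nra.
Qed.
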